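(* Let $G=(V,E)$ be a connected simple graph with $n=|V|\ge 2$ vertices and let $\lambda_2(G)$ be the second smallest eigenvalue of its Laplacian. For vertices $u,v$ let $\mathbb{P}_{uv}=\{P^{(1)}_{uv},\dots,P^{(n_{uv})}_{uv}\}$ be the set of all shortest paths from $u$ to $v$ (so $n_{uv}=|\mathbb{P}_{uv}|\ge1$), and let $d(u,v)$ be their common length. Let $\alpha$ be a path weighting strategy, i.e. for every ordered pair $(u,v)$ a vector $\alpha_{uv}=(\alpha^{(1)}_{uv},\dots,\alpha^{(n_{uv})}_{uv})$ with $\alpha^{(q)}_{uv}\ge 0$ and $\sum_{q=1}^{n_{uv}}\alpha^{(q)}_{uv}=1$. For each edge $k\in E$ define the extended connection-graph-stability score $$C_k(\alpha)=\frac12\sum_{u\in V}\sum_{v\in V} d(u,v)\sum_{q=1}^{n_{uv}}\varphi^{(q)}_{uv}(k)\,\alpha^{(q)}_{uv},\qquad \varphi^{(q)}_{uv}(k)=\begin{cases}1 & k\in P^{(q)}_{uv},\\ 0&\text{otherwise,}\end{cases}$$ and let $C_{\max}(\alpha)=\max_{k\in E}C_k(\alpha)$. Then for every path weighting strategy $\alpha$, $$\lambda_2(G)\ \ge\ \frac{n}{C_{\max}(\alpha)}.$$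
   Context: The Laplacian of $G$ is $L=D-A$ with $A$ the $0/1$ adjacency matrix and $D$ the diagonal degree matrix; eigenvalues $0=\lambda_1\le\lambda_2\le\dots\le\lambda_n$. The length of a path is its number of edges. For $u=v$ the only shortest path is the trivial one of length $0$, contributing nothing. *)

(* Defs.v *)
From HB Require Import structures.
From mathcomp Require Import all_boot all_order all_algebra.
Set Implicit Arguments. Unset Strict Implicit. Unset Printing Implicit Defensive.
Import Order.TTheory GRing.Theory Num.Theory.
Local Open Scope ring_scope.

Section Graph.
Variables (n : nat) (e : rel 'I_n).

Definition simple_graph : Prop := symmetric e /\ irreflexive e.

Definition connected_graph : Prop := forall u v : 'I_n, connect e u v.

(* a walk from u to v, given by the list p of vertices visited after u;
   its length (number of edges) is size p *)
Definition is_walk (u v : 'I_n) (p : seq 'I_n) : bool :=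
  path e u p && (last u p == v).

(* d(u,v): the least m such that a walk of length m from u to v exists
   (searched among m < n, which suffices for connected graphs) *)
Definition dist (u v : 'I_n) : nat :=
  find (fun m => [exists p : m.-tuple 'I_n, is_walk u v p]) (iota 0 n).

Definition is_shortest_path (u v : 'I_n) (p : seq 'I_n) : bool :=
  (size p == dist u v) && is_walk u v p.

Definition edge_in_path (x y u : 'I_n) (p : seq 'I_n) : bool :=
  has (fun ab : 'I_n * 'I_n =>
         ((ab.1 == x) && (ab.2 == y)) || ((ab.1 == y) && (ab.2 == x)))
      (zip (u :: p) p).

Variable R : rcfType.

Definition laplacian : 'M[R]_n :=
  \matrix_(i, j) ((if i == j then #|[pred k | e i k]|%:R else 0) - (e i j)%:R).

(* path weighting strategy: alpha u v p is the weight of the shortest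
   path p from u to v (values on non-shortest paths are irrelevant) *)
Definition weighting_strategy (alpha : 'I_n -> 'I_n -> seq 'I_n -> R) : Prop :=
  forall u v : 'I_n,
    (forall p : (dist u v).-tuple 'I_n, is_walk u v p -> 0 <= alpha u v p) /\
    \sum_(p : (dist u v).-tuple 'I_n | is_walk u v p) alpha u v p = 1.

Definition C_score (alpha : 'I_n -> 'I_n -> seq 'I_n -> R) (x y : 'I_n) : R :=
  2^-1 * \sum_(u : 'I_n) \sum_(v : 'I_n)
     (dist u v)%:R *
     \sum_(p : (dist u v).-tuple 'I_n | is_walk u v p)
        (edge_in_path x y u p)%:R * alpha u v p.

(* C_max = maximum over edges (ordered pairs (x,y) with e x y; the score is
   symmetric in x,y).  All scores are >= 0, so starting the max at 0 is harmless. *)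
Definition C_max (alpha : 'I_n -> 'I_n -> seq 'I_n -> R) : R :=
  \big[Num.max/0]_(xy : 'I_n * 'I_n | e xy.1 xy.2) C_score alpha xy.1 xy.2.

End Graph.

Arguments weighting_strategy {n} e {R} alpha.
Arguments C_score {n} e {R} alpha x y.
Arguments C_max {n} e {R} alpha.

(* Main.v *)
Require Import Defs.
From HB Require Import structures.
From mathcomp Require Import all_boot all_order all_algebra.
Set Implicit Arguments. Unset Strict Implicit. Unset Printing Implicit Defensive.
Import Order.TTheory GRing.Theory Num.Theory.

Section G0.
Variables (n : nat) (e : rel 'I_n).

Lemma walk_shorter (p : seq 'I_n) (u : 'I_n) : path e u p -> ~~ uniq (u :: p) ->
  exists q, [&& path e u q, last u q == last u p & size q < size p].
Proof.
elim: p u => [|x p IH] u; first by [].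
move=> Hpath; move: (Hpath); rewrite [path _ _ _]/= => /andP[eux pxp].
case: (boolP (u \in x :: p)) => [ux _ | ux].
  move: (x :: p) ux Hpath => s ux Hs.
  case/splitPr: ux Hs => p1 p2 Hs.
  exists p2.
  rewrite cat_path /= in Hs; case/and3P: Hs => _ _ ->.
  by rewrite last_cat /= eqxx size_cat /= addnS ltnS leq_addl.
rewrite cons_uniq ux /= => Hu.
have [q /and3P[q1 q2 q3]] := IH x pxp Hu.
exists (x :: q); rewrite /= eux q1 /=.
by rewrite q2 /= ltnS.
Qed.

Lemma dist_le (u w : 'I_n) (q : seq 'I_n) :
  is_walk e u w q -> (size q < n)%N -> (dist e u w <= size q)%N.
Proof.
move=> Hq Hn; rewrite leqNgt; apply/negP => Hlt.
have Hf := before_find 0%N Hlt; rewrite nth_iota // add0n in Hf.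
move: Hf => /negbT/negP; apply.
apply/existsP; exists (in_tuple q); done.
Qed.

Lemma dist_le_n (u w : 'I_n) : (dist e u w <= n)%N.
Proof. by rewrite /dist; apply: leq_trans (find_size _ _) _; rewrite size_iota. Qed.

Lemma shortest_uniq (u w : 'I_n) (p : seq 'I_n) :
  size p = dist e u w -> is_walk e u w p -> uniq (u :: p).
Proof.
move=> Hs Hw; apply/negPn/negP => Hu.
move: (Hw) => /andP[Hp Hl].
have [q /and3P[q1 q2 q3]] := walk_shorter Hp Hu.
have Hqw : is_walk e u w q by rewrite /is_walk q1 (eqP q2).
have := dist_le Hqw (leq_trans (leq_trans q3 (eq_leq Hs)) (dist_le_n u w)).
rewrite -Hs leqNgt q3; done.
Qed.
End G0.

Lemma mem_zip' (T : eqType) (s t : seq T) a b :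
  (a, b) \in zip s t -> (a \in s) && (b \in t).
Proof.
elim: s t => [|x s IH] [|y t] //=.
rewrite in_cons => /orP[/eqP[-> ->]|/IH /andP[H1 H2]].
  by rewrite !in_cons !eqxx.
by rewrite !in_cons H1 H2 !orbT.
Qed.

Definition swp (T : Type) (z : T * T) := (z.2, z.1).

Lemma steps_uniq (T : eqType) (p : seq T) (u : T) :
  uniq (u :: p) -> uniq (zip (u :: p) p ++ map (@swp T) (zip (u :: p) p)).
Proof.
elim: p u => [|x p IH] u //=.
rewrite in_cons negb_or => /andP[/andP[ux up] /andP[xp Hp]].
have IH' := IH x; rewrite /= xp Hp in IH'; have {}IH' := IH' isT.
set S := zip (x :: p) p in IH' *.
have memS a b : (a, b) \in S -> (a \in x :: p) && (b \in p) by apply: mem_zip'.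
have memSw a b : (a, b) \in map (@swp T) S -> (b, a) \in S.
  by case/mapP => -[c d] H [-> ->].
rewrite mem_cat in_cons negb_or; apply/andP; split.
  apply/andP; split.
    by apply/negP => /memS; rewrite in_cons (negPf ux) (negPf up).
  rewrite negb_or; apply/andP; split.
    by apply/negP => /eqP[]; move/eqP; rewrite (negPf ux).
  by apply/negP => /memSw /memS /andP[_]; rewrite (negPf up).
rewrite -cat1s uniq_catCA /= IH' andbT mem_cat negb_or; apply/andP; split.
  by apply/negP => /memS /andP[_]; rewrite (negPf up).
by apply/negP => /memSw /memS /andP[]; rewrite in_cons (negPf ux) (negPf up).
Qed.
Local Open Scope ring_scope.
Section R.
Variable R : rcfType.

Lemma dsum (T : finType) (g : T -> R) :
  \sum_i \sum_j (g i - g j) ^+ 2 =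
  2%:R * (#|T|%:R * \sum_i g i ^+ 2 - (\sum_i g i) ^+ 2).
Proof.
have cst (x : R) : \sum_(j : T) x = #|T|%:R * x.
  by rewrite sumr_const mulr_natl.
rewrite (eq_bigr (fun i => #|T|%:R * g i ^+ 2 - (g i * \sum_j g j) *+ 2 + \sum_j g j ^+ 2)); last first.
  move=> i _; under eq_bigr => j _ do rewrite sqrrB.
  rewrite !big_split /= cst sumrN sumrMnl mulr_sumr //.
rewrite !big_split /= sumrN sumrMnl -mulr_suml -mulr_sumr cst.
rewrite -expr2 mulr2n mulrDl mul1r.
set A := _ * \sum_i _; set B := _ ^+ 2.
by rewrite opprD !addrA addrAC.
Qed.
End R.
Section R2.
Variable R : rcfType.
Lemma telesc (T : Type) (f : T -> R) (u : T) (p : seq T) :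
  \sum_(z <- zip (u :: p) p) (f z.1 - f z.2) = f u - f (last u p).
Proof.
elim: p u => [|x p IH] u /=; first by rewrite big_nil subrr.
by rewrite big_cons IH /= addrA subrK.
Qed.

Lemma cs_seq (T : Type) (x0 : T) (r : seq T) (h : T -> R) :
  (\sum_(z <- r) h z) ^+ 2 <= (size r)%:R * \sum_(z <- r) h z ^+ 2.
Proof.
rewrite !(big_nth x0) !big_mkord.
have := dsum (fun i : 'I_(size r) => h (nth x0 r i)).
rewrite card_ord => H.
have : 0 <= \sum_(i < size r) \sum_(j < size r) (h (nth x0 r i) - h (nth x0 r j)) ^+ 2.
  by apply: sumr_ge0 => i _; apply: sumr_ge0 => j _; apply: sqr_ge0.
by rewrite H pmulr_rge0 // subr_ge0.
Qed.
End R2.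
Lemma sq_split (R : comPzRingType) (a b : R) : (a - b)^+2 = (a^+2 - a*b) + (b^+2 - b*a).
Proof. by rewrite sqrrB [b*a]mulrC mulr2n opprD !addrA addrAC. Qed.

Section Q.
Variables (R : rcfType) (n : nat) (e : rel 'I_n).
Hypothesis esym : symmetric e.

Lemma deg_sum (i : 'I_n) : #|[pred k | e i k]|%:R = \sum_j (e i j)%:R :> R.
Proof.
rewrite -sum1_card natr_sum big_mkcond /=; apply: eq_bigr => j _.
by rewrite inE; case: (e i j).
Qed.

Lemma lap_row (f : 'I_n -> R) (i : 'I_n) :
  \sum_j laplacian e R i j * f j = \sum_j (e i j)%:R * (f i - f j).
Proof.
under eq_bigr do rewrite mxE mulrBl.
rewrite sumrB.
rewrite (bigD1 i) //= eqxx big1 ?addr0; last first.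
  by move=> j /negPf; rewrite eq_sym => ->; rewrite mul0r.
rewrite deg_sum mulr_suml -sumrB; apply: eq_bigr => j _.
by rewrite mulrBr.
Qed.

Lemma quad_form (v : 'rV[R]_n) :
  (v *m laplacian e R *m v^T) 0 0 =
  2%:R^-1 * \sum_(xy : 'I_n * 'I_n | e xy.1 xy.2) (v 0 xy.1 - v 0 xy.2) ^+ 2.
Proof.
set f := fun i => v 0 i.
have H1 : (v *m laplacian e R *m v^T) 0 0 =
   \sum_i \sum_j (e i j)%:R * (f i ^+ 2 - f i * f j).
  rewrite mxE.
  under eq_bigr do rewrite !mxE mulr_suml.
  rewrite exchange_big /=; apply: eq_bigr => i _.
  rewrite (eq_bigr (fun j => f i * (laplacian e R i j * f j))); last by move=> j _; rewrite mulrA.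
  by rewrite -mulr_sumr lap_row mulr_sumr; apply: eq_bigr => j _; rewrite mulrCA mulrBr expr2.
rewrite H1 (eq_bigl (fun xy : 'I_n * 'I_n => xpredT xy.1 && e xy.1 xy.2)) //.
rewrite -(pair_big_dep xpredT (fun i j => e i j) (fun i j => (v 0 i - v 0 j) ^+ 2)) /=.
set S := \sum_(i < n) _.
have -> : \sum_(i < n) \sum_(j < n | e i j) (v 0 i - v 0 j) ^+ 2 = S + S.
  rewrite {2}/S exchange_big /= -big_split /=; apply: eq_bigr => i _.
  rewrite -big_split /= big_mkcond /=; apply: eq_bigr => j _.
  rewrite esym; case: (e j i); rewrite ?mul1r ?mul0r ?addr0 //.
  exact: sq_split.
by rewrite -mulr2n -[S *+ 2]mulr_natl mulrA mulVf ?mul1r // pnatr_eq0.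
Qed.
End Q.
Lemma zip_path_edge (T : eqType) (e : rel T) (u : T) (p : seq T) a b :
  path e u p -> (a, b) \in zip (u :: p) p -> e a b.
Proof.
elim: p u => [|x p IH] u //=.
move=> /andP[eux Hp]; rewrite in_cons => /orP[/eqP[-> ->] //|].
exact: IH.
Qed.

Lemma m4 (R : comPzRingType) (a d E D : R) : a * (d * (E * D)) = D * d * (E * a).
Proof. rewrite -!mulrA [E * D]mulrC [d * (D * E)]mulrCA [a * (D * _)]mulrCA; congr (_ * _); rewrite mulrCA; congr (_ * _); exact: mulrC. Qed.

Section K.
Variables (R : rcfType) (n : nat) (e : rel 'I_n).
Hypothesis esym : symmetric e.

Lemma pair_bound (u w : 'I_n) (p : seq 'I_n) (f : 'I_n -> R) :
  size p = dist e u w -> is_walk e u w p ->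
  2%:R * (f u - f w) ^+ 2 <= (dist e u w)%:R *
    \sum_(xy : 'I_n * 'I_n | e xy.1 xy.2)
       (edge_in_path xy.1 xy.2 u p)%:R * (f xy.1 - f xy.2) ^+ 2.
Proof.
move=> Hs Hw.
have Hu := shortest_uniq Hs Hw.
move: (Hw) => /andP[Hp /eqP Hl].
set s := zip (u :: p) p.
set D := fun z : 'I_n * 'I_n => (f z.1 - f z.2) ^+ 2.
have Hsz : size s = size p by rewrite size_zip /=; apply/minn_idPr; exact: leqnSn.
have HT : f u - f w = \sum_(z <- s) (f z.1 - f z.2) by rewrite telesc Hl.
have HCS := cs_seq (u, u) s (fun z => f z.1 - f z.2).
rewrite -HT Hsz Hs in HCS.
have Hsw : \sum_(z <- s ++ map (@swp _) s) D z = 2%:R * \sum_(z <- s) D z.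
  rewrite big_cat big_map /= mulr2n mulrDl mul1r; congr (_ + _).
  by apply: eq_bigr => z _; rewrite /D /= -sqrrN opprB.
have Hun := steps_uniq Hu.
rewrite -/s in Hun.
have Hle : \sum_(z <- s ++ map (@swp _) s) D z <=
    \sum_(xy : 'I_n * 'I_n | e xy.1 xy.2) (edge_in_path xy.1 xy.2 u p)%:R * D xy.
  rewrite big_uniq //= big_mkcond [X in _ <= X]big_mkcond /=.
  apply: ler_sum => z _.
  case: (boolP (z \in s ++ map (@swp _) s)) => Hz; last first.
    by case: (e z.1 z.2) => //; apply: mulr_ge0; [apply: ler0n | apply: sqr_ge0].

  have [Hez Heip] : e z.1 z.2 /\ edge_in_path z.1 z.2 u p.
    move: Hz; rewrite mem_cat => /orP[|/mapP[[a b] Hab ->]].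
      case: z => a b /= Hab; split; first exact: zip_path_edge Hp Hab.
      by apply/hasP; exists (a, b) => //=; rewrite !eqxx.
    rewrite /swp /=; split; first by rewrite esym; exact: zip_path_edge Hp Hab.
    by apply/hasP; exists (a, b) => //=; rewrite !eqxx orbT.
  by rewrite Hez Heip mul1r.
have Hd : 0 <= (dist e u w)%:R :> R by apply: ler0n.
apply: le_trans (ler_wpM2l Hd Hle).
rewrite Hsw [X in _ <= X]mulrCA; apply: ler_wpM2l; first exact: ler0n.
exact: HCS.
Qed.

Variable alpha : 'I_n -> 'I_n -> seq 'I_n -> R.

Lemma score_le_max x y : e x y -> C_score e alpha x y <= C_max e alpha.
Proof.
by move=> exy; rewrite /C_max (bigD1 (x, y)) //= le_max lexx.
Qed.

Hypothesis Halpha : weighting_strategy e alpha.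

Lemma Cmax_ge0 : 0 <= C_max e alpha.
Proof.
rewrite /C_max; elim/big_ind: _ => //; first by move=> a b Ha Hb; rewrite le_max Ha.
move=> xy _; rewrite /C_score; apply: mulr_ge0; first by rewrite invr_ge0 ler0n.
apply: sumr_ge0 => u _; apply: sumr_ge0 => w _; apply: mulr_ge0; first exact: ler0n.
apply: sumr_ge0 => p Hp; apply: mulr_ge0; first exact: ler0n.
exact: (proj1 (Halpha u w)).
Qed.

Lemma exch (D : 'I_n * 'I_n -> R) :
  \sum_u \sum_w \sum_(p : (dist e u w).-tuple 'I_n | is_walk e u w p)
     alpha u w p * ((dist e u w)%:R *
       \sum_(xy : 'I_n * 'I_n | e xy.1 xy.2) (edge_in_path xy.1 xy.2 u p)%:R * D xy)
  = \sum_(xy : 'I_n * 'I_n | e xy.1 xy.2) D xy * (2%:R * C_score e alpha xy.1 xy.2).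
Proof.
under [RHS]eq_bigr => xy _ do rewrite /C_score [X in D xy * X]mulrA mulfV ?mul1r ?pnatr_eq0 //.
transitivity (\sum_u \sum_w \sum_(xy : 'I_n * 'I_n | e xy.1 xy.2)
     \sum_(p : (dist e u w).-tuple 'I_n | is_walk e u w p)
     alpha u w p * ((dist e u w)%:R * ((edge_in_path xy.1 xy.2 u p)%:R * D xy))).
  apply eq_bigr => u _; apply eq_bigr => w _.
  rewrite [RHS]exchange_big /=; apply eq_bigr => p _.
  by rewrite !mulr_sumr.
transitivity (\sum_u \sum_(xy : 'I_n * 'I_n | e xy.1 xy.2) \sum_w
     \sum_(p : (dist e u w).-tuple 'I_n | is_walk e u w p)
     alpha u w p * ((dist e u w)%:R * ((edge_in_path xy.1 xy.2 u p)%:R * D xy))).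
  by apply eq_bigr => u _; rewrite [LHS]exchange_big.
rewrite [LHS]exchange_big /=; apply eq_bigr => xy _.
rewrite mulr_sumr; apply eq_bigr => u _.
rewrite mulr_sumr; apply eq_bigr => w _.
rewrite mulrA mulr_sumr; apply eq_bigr => p _.
exact: m4.
Qed.

Lemma key (f : 'I_n -> R) : \sum_i f i = 0 ->
  2%:R * (2%:R * (n%:R * \sum_i f i ^+ 2)) <=
  (\sum_(xy : 'I_n * 'I_n | e xy.1 xy.2) (f xy.1 - f xy.2) ^+ 2) * (2%:R * C_max e alpha).
Proof.
move=> Hf.
have H1 : \sum_u \sum_w 2%:R * (f u - f w) ^+ 2 = 2%:R * (2%:R * (n%:R * \sum_i f i ^+ 2)).
  rewrite (eq_bigr (fun u => 2%:R * \sum_w (f u - f w) ^+ 2)); last by move=> u _; rewrite mulr_sumr.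
  by rewrite -mulr_sumr dsum card_ord Hf expr2 mul0r subr0.
rewrite -H1.
apply: le_trans (_ : _ <= \sum_(xy : 'I_n * 'I_n | e xy.1 xy.2)
    (f xy.1 - f xy.2) ^+ 2 * (2%:R * C_score e alpha xy.1 xy.2)) _.
  rewrite -(exch (fun xy => (f xy.1 - f xy.2) ^+ 2)).
  apply ler_sum => u _; apply ler_sum => w _.
  have [Hpos Hsum] := Halpha u w.
  rewrite -[X in X <= _]mul1r -{1}Hsum mulr_suml.
  apply ler_sum => p Hp.
  apply: ler_wpM2l; first exact: Hpos.
  exact: (pair_bound f (size_tuple p) Hp).
rewrite mulr_suml; apply ler_sum => xy Hxy.
apply: ler_wpM2l; first exact: sqr_ge0.
apply: ler_wpM2l; first exact: ler0n.
exact: score_le_max.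
Qed.
End K.
Section E.
Variables (R : rcfType) (n : nat) (e : rel 'I_n).
Hypothesis esym : symmetric e.
Hypothesis n_gt0 : (0 < n)%N.
Variable alpha : 'I_n -> 'I_n -> seq 'I_n -> R.
Hypothesis Halpha : weighting_strategy e alpha.

Lemma eig_bound (v : 'rV[R]_n) (l : R) :
  v != 0 -> v *m laplacian e R = l *: v -> \sum_i v 0 i = 0 ->
  n%:R / C_max e alpha <= l.
Proof.
move=> vnz Hev Hf.
have Hk := key esym Halpha Hf.
have Hq := quad_form esym v.
set SD := \sum_(xy : 'I_n * 'I_n | e xy.1 xy.2) (v 0 xy.1 - v 0 xy.2) ^+ 2 in Hk Hq.
set S2 := \sum_i v 0 i ^+ 2 in Hk.
have HvL : (v *m laplacian e R *m v^T) 0 0 = l * S2.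
  rewrite Hev -scalemxAl mxE mxE; congr (_ * _); apply: eq_bigr => i _.
  by rewrite mxE expr2.
have HSD : SD = 2%:R * (l * S2).
  rewrite -HvL Hq mulrA mulfV ?mul1r //. rewrite pnatr_eq0 //.
have S2pos : 0 < S2.
  rewrite lt0r; apply/andP; split; last by apply: sumr_ge0 => i _; exact: sqr_ge0.
  apply/negP => /eqP H0; move/negP: vnz; apply; apply/eqP/rowP => i.
  have := @psumr_eq0P _ _ xpredT (fun j => v 0 j ^+ 2) (fun j _ => sqr_ge0 (v 0 j)) H0 i isT.
  by rewrite mxE => /eqP; rewrite sqrf_eq0 => /eqP.
have two_gt0 : (0 : R) < 2%:R by rewrite ltr0n.
have H1 : n%:R * S2 <= l * C_max e alpha * S2.
  move: Hk; rewrite HSD.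
  rewrite -[X in _ <= X]mulrA [l * S2 * (2 * _)]mulrCA !(ler_pM2l two_gt0).
  by rewrite mulrAC.
rewrite (ler_pM2r S2pos) in H1.
have Cge0 := Cmax_ge0 Halpha.
have Cpos : 0 < C_max e alpha.
  rewrite lt0r Cge0 andbT; apply/negP => /eqP C0.
  by move: H1; rewrite C0 mulr0 leNgt ltr0n n_gt0.
by rewrite ler_pdivrMr.
Qed.
End E.
Section M.
Variables (R : rcfType) (k : nat).

Definition Qm : 'M[R]_k.+1 :=
  \matrix_(i, j) (if j == 0 then (if i == 0 then 1 else -1) else (i == j)%:R).
Definition Qi : 'M[R]_k.+1 := \matrix_(i, j) (if j == 0 then 1 else (i == j)%:R).

Lemma QQi : Qm *m Qi = 1%:M.
Proof.
apply/matrixP => i j; rewrite !mxE.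
case: (eqVneq j 0) => [->|jn0].
  under eq_bigr do rewrite [Qi _ 0]mxE eqxx mulr1.
  rewrite (bigD1 0) //= mxE eqxx.
  case: (eqVneq i 0) => [->|in0].
    rewrite big1 ?addr0 // => l ln0; rewrite mxE (negPf ln0) eq_sym.
    by rewrite (negPf ln0).
  rewrite (bigD1 i) //= big1 ?addr0.
    by rewrite !mxE (negPf in0) eqxx addNr.
  move=> l /andP[ln0 lni]; rewrite mxE (negPf ln0).
  by rewrite eq_sym (negPf lni).
rewrite (bigD1 j) //= big1 ?addr0.
  by rewrite !mxE (negPf jn0) eqxx mulr1.
move=> l lnj; rewrite [Qi l j]mxE (negPf jn0) (negPf lnj) mulr0 //.
Qed.

Lemma QiQ : Qi *m Qm = 1%:M.
Proof. exact: mulmx1C QQi. Qed.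

Lemma conj_col0 (L : 'M[R]_k.+1) : (forall i, \sum_j L i j = 0) ->
  forall i, (Qm *m L *m Qi) i 0 = 0.
Proof.
move=> Hrow i; rewrite mxE.
under eq_bigr do rewrite [Qi _ 0]mxE eqxx mulr1 mxE.
rewrite exchange_big /= big1 // => l _.
by rewrite -mulr_sumr Hrow mulr0.
Qed.

Lemma char_sim (L : 'M[R]_k.+1) : char_poly (Qm *m L *m Qi) = char_poly L.
Proof.
rewrite /char_poly /char_poly_mx !map_mxM.
have PP' : (map_mx polyC Qm) *m (map_mx polyC Qi) = 1%:M :> 'M[{poly R}]_k.+1.
  by rewrite -map_mxM QQi map_mx1.
have -> : 'X%:M - (map_mx polyC Qm) *m (map_mx polyC L) *m (map_mx polyC Qi) =
    (map_mx polyC Qm) *m ('X%:M - map_mx polyC L) *m (map_mx polyC Qi) :> 'M[{poly R}]_k.+1.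
  rewrite mulmxBr mulmxBl scalar_mxC.
  by rewrite -(mulmxA 'X%:M) PP' mulmx1.
rewrite !det_mulmx mulrC mulrA -det_mulmx.
by rewrite mulmx1C // det1 mul1r.
Qed.

Lemma char_col0 (A : 'M[R]_k.+1) : (forall i, A i 0 = 0) ->
  char_poly A = 'X * char_poly (row' 0 (col' 0 A)).
Proof.
move=> H0; rewrite /char_poly (expand_det_col _ 0) (bigD1 0) //= big1 ?addr0.
  by rewrite /cofactor row'_col'_char_poly_mx !mxE H0 eqxx /= expr0 mul1r subr0.
move=> i in0; rewrite !mxE H0 (negPf in0) /=.
by rewrite mulr0n polyC0 subr0 mul0r.
Qed.

Lemma eigvec (A : 'M[R]_k.+1) (H0 : forall i, A i 0 = 0) (w : 'rV[R]_k) (l : R) :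
  w *m row' 0 (col' 0 A) = l *: w ->
  \row_j (oapp (fun j' => w 0 j') 0 (unlift 0 j)) *m A =
  l *: \row_j (oapp (fun j' => w 0 j') 0 (unlift 0 j)).
Proof.
move=> Hw; apply/rowP => j; rewrite !mxE big_ord_recl !mxE unlift_none mul0r add0r.
under eq_bigr do rewrite mxE liftK /=.
case: unliftP => [j'|] ->.
  have := congr1 (fun M : 'rV[R]_k => M 0 j') Hw; rewrite !mxE => <-.
  by apply: eq_bigr => i _; rewrite !mxE.
by rewrite mulr0 big1 // => i _; rewrite H0 mulr0.
Qed.
End M.

Unset Implicit Arguments.
Local Open Scope ring_scope.
Theorem theorem2 (R : rcfType) (n : nat) (e : rel 'I_n)
  (Hn : (2 <= n)%N) (Hsimple : simple_graph e) (Hconn : connected_graph e)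
  (s : seq R)
  (Hs : char_poly (laplacian e R) = \prod_(x <- s) ('X - x%:P))
  (Hsorted : sorted <=%R s)
  (alpha : 'I_n -> 'I_n -> seq 'I_n -> R)
  (Halpha : weighting_strategy e alpha) :
  n%:R / C_max e alpha <= s`_1.
Proof.
case: n e Hn Hsimple Hconn Hs alpha Halpha => [//|k] e Hn [esy _] _ Hs alpha Halpha.
set L := laplacian e R.
have Hrow : forall i, \sum_j L i j = 0.
  move=> i; transitivity (\sum_j L i j * (fun _ => 1) j).
    by apply eq_bigr => j _; rewrite mulr1.
  by rewrite (lap_row e (fun _ => 1)) big1 // => j _; rewrite subrr mulr0.
set A := Qm R k *m L *m Qi R k.
have HA0 : forall i, A i 0 = 0 := conj_col0 Hrow.
set B := row' 0 (col' 0 A).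
have Hchar : char_poly L = 'X * char_poly B by rewrite -char_sim char_col0.
have Hroot : forall x, root (char_poly B) x -> k.+1%:R / C_max e alpha <= x.
  move=> x; rewrite -eigenvalue_root_char => /eigenvalueP [w Hw wnz].
  have Hy := eigvec HA0 Hw.
  set y := \row_j _ in Hy.
  have y00 : y 0 0 = 0 by rewrite mxE unlift_none.
  apply: (eig_bound esy (ltn0Sn k) Halpha (v := y *m Qm R k)).
  - apply/eqP => v0.
    have y0 : y = 0 by rewrite -[y]mulmx1 -QQi mulmxA v0 mul0mx.
    move/negP: wnz; apply; apply/eqP/rowP => j.
    have := congr1 (fun M : 'rV[R]_k.+1 => M 0 (lift 0 j)) y0.
    by rewrite !mxE liftK.
  - rewrite -(mulmxA y) -[Qm R k *m L]mulmx1 -QiQ !mulmxA.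
    have -> : y *m Qm R k *m L *m Qi R k = y *m A by rewrite /A !mulmxA.
    by rewrite Hy scalemxAl.
  - transitivity ((y *m Qm R k *m Qi R k) 0 0).
      rewrite mxE; apply eq_bigr => i _.
      by rewrite [Qi R k i 0]mxE eqxx mulr1.
    by rewrite -mulmxA QQi mulmx1 y00.
have Hsize : size s = k.+1.
  have := size_char_poly L; rewrite Hs size_prod_XsubC.
  by case.
have H0s : 0 \in s.
  by rewrite -root_prod_XsubC -Hs Hchar rootM rootX eqxx.
have Hrem : char_poly B = \prod_(x <- rem 0 s) ('X - x%:P).
  apply: (mulfI (negbT (@polyX_eq0 R))).
  by rewrite -Hchar Hs (perm_big _ (perm_to_rem H0s)) big_cons polyC0 subr0.
have Hge : forall x, x \in rem 0 s -> k.+1%:R / C_max e alpha <= x.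
  by move=> x Hx; apply: Hroot; rewrite Hrem root_prod_XsubC.
case: s Hs Hsorted Hsize H0s Hrem Hge => [//|x0 [|x1 r]] Hs Hsorted Hsize H0s Hrem Hge /=.
  by exfalso; move: Hsize => /= [Hk]; move: Hn; rewrite -Hk.
case: (eqVneq x0 0) => [Hx0|Hx0].
  by apply: Hge; rewrite /= Hx0 eqxx mem_head.
have Hle : x0 <= x1 by move: Hsorted => /= /andP[].
apply: le_trans Hle.
by apply: Hge; rewrite /= (negPf Hx0) mem_head.
Qed.
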